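(* Let $\Re$ be a commutative Krasner hyperring with identity $1\ne0$, $\phi:L(\Re)\to L(\Re)\cup\{\emptyset\}$ a function, and $T$ a proper $\phi$-primary hyperideal of $\Re$. If $T$ is not primary, then $T^2\subseteq\phi(T)$. Equivalently, if $T^2\not\subseteq\phi(T)$ then $T$ is primary.
   Context: Krasner hyperring: $(\Re,\oplus)$ canonical hypergroup, $(\Re,\circ)$ commutative semigroup with identity $1\ne0$, $0$ absorbing, distributive. Hyperideals and $L(\Re)$ as usual; $T^2$ is the hyperideal generated by $\{a\circ b:a,b\in T\}$. $T$ is primary if $a\circ b\in T$ implies $a\in T$ or $b^k\in T$ for some $k\in\mathbb{N}$; $T$ is $\phi$-primary if $a\circ b\in T$, $a\circ b\notin\phi(T)$ imply $a\in T$ or $b^k\in T$ for some $k\in\mathbb{N}$. *)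

(* Defs.v *)
Set Implicit Arguments.

Record KrasnerHyperring := {
  carrier :> Type;
  hadd : carrier -> carrier -> carrier -> Prop;  (* hadd a b x  <->  x \in a (+) b *)
  hzero : carrier;
  hneg : carrier -> carrier;
  hmul : carrier -> carrier -> carrier;
  hone : carrier;
  hadd_nonempty : forall a b, exists x, hadd a b x;
  hadd_assoc : forall a b c x,
      (exists y, hadd a b y /\ hadd y c x) <-> (exists y, hadd b c y /\ hadd a y x);
  hadd_comm : forall a b x, hadd a b x <-> hadd b a x;
  hadd_zero : forall a x, hadd a hzero x <-> x = a;
  hneg_spec : forall a, hadd a (hneg a) hzero;
  hneg_unique : forall a b, hadd a b hzero -> b = hneg a;
  hadd_rev : forall a b c, hadd a b c -> hadd (hneg a) c b;
  hmul_assoc : forall a b c, hmul a (hmul b c) = hmul (hmul a b) c;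
  hmul_comm : forall a b, hmul a b = hmul b a;
  hmul_one : forall a, hmul hone a = a;
  hone_neq_zero : hone <> hzero;
  hmul_zero : forall a, hmul hzero a = hzero;
  hmul_distr : forall a b c x,
      (exists y, hadd b c y /\ x = hmul a y) <-> hadd (hmul a b) (hmul a c) x
}.

Arguments hadd {k}. Arguments hzero {k}. Arguments hneg {k}.
Arguments hmul {k}. Arguments hone {k}.

Section Ideals.
Variable R : KrasnerHyperring.

Definition subset (A B : R -> Prop) : Prop := forall x, A x -> B x.

Definition hyperideal (I : R -> Prop) : Prop :=
  (exists x, I x) /\
  (forall a b x, I a -> I b -> hadd a (hneg b) x -> I x) /\
  (forall r a, I a -> I (hmul r a)).

Definition proper (I : R -> Prop) : Prop := exists x, ~ I x.

Fixpoint hpow (b : R) (k : nat) : R :=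
  match k with 0 => hone | S k' => hmul b (hpow b k') end.

Definition gen_hyperideal (S : R -> Prop) : R -> Prop :=
  fun x => forall J, hyperideal J -> subset S J -> J x.

Definition hsq (T : R -> Prop) : R -> Prop :=
  gen_hyperideal (fun x => exists a b, T a /\ T b /\ x = hmul a b).

Definition primary (T : R -> Prop) : Prop :=
  forall a b, T (hmul a b) -> T a \/ exists k, 1 <= k /\ T (hpow b k).

Definition phi_primary (phi : (R -> Prop) -> (R -> Prop)) (T : R -> Prop) : Prop :=
  forall a b, T (hmul a b) -> ~ phi T (hmul a b) ->
    T a \/ exists k, 1 <= k /\ T (hpow b k).

End Ideals.

Arguments subset {R}. Arguments hyperideal {R}. Arguments proper {R}.
Arguments hpow {R}. Arguments gen_hyperideal {R}. Arguments hsq {R}.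
Arguments primary {R}. Arguments phi_primary {R}.

(* Main.v *)
Require Import Defs.
From Stdlib Require Import Classical.
Set Implicit Arguments.


Lemma negneg {R : KrasnerHyperring} (q : R) : hneg (hneg q) = q.
Proof.
  symmetry. apply hneg_unique. apply hadd_comm. apply hneg_spec.
Qed.

Lemma ideal0 {R : KrasnerHyperring} (I : R -> Prop) : hyperideal I -> I hzero.
Proof.
  intros [[x Hx] [Hs _]]. eapply Hs; [exact Hx|exact Hx|apply hneg_spec].
Qed.

Lemma idealN {R : KrasnerHyperring} (I : R -> Prop) q : hyperideal I -> I q -> I (hneg q).
Proof.
  intros HI Hq. pose proof (ideal0 HI) as H0. destruct HI as [_ [Hs _]].
  eapply Hs; [exact H0|exact Hq|]. apply hadd_comm, hadd_zero. reflexivity.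
Qed.

Lemma add_closed {R : KrasnerHyperring} (I : R -> Prop) {p q u} : hyperideal I -> I p -> I q -> hadd p q u -> I u.
Proof.
  intros HI Hp Hq Hu. pose proof (idealN q HI Hq) as Hn. destruct HI as [_ [Hs _]].
  eapply Hs; [exact Hp|exact Hn|]. rewrite negneg. exact Hu.
Qed.

Lemma sub_r {R : KrasnerHyperring} (I : R -> Prop) {p q u} : hyperideal I -> hadd p q u -> I u -> I p -> I q.
Proof.
  intros HI H Hu Hp. apply hadd_rev in H. apply hadd_comm in H.
  destruct HI as [_ [Hs _]]. eapply Hs; [exact Hu|exact Hp|exact H].
Qed.

Lemma sub_l {R : KrasnerHyperring} (I : R -> Prop) {p q u} : hyperideal I -> hadd p q u -> I u -> I q -> I p.
Proof.
  intros HI H Hu Hq. apply hadd_comm in H. eapply sub_r; eauto.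
Qed.

Lemma mul_distr {R : KrasnerHyperring} (a : R) {b c y : R} : hadd b c y -> hadd (hmul a b) (hmul a c) (hmul a y).
Proof. intros H. apply hmul_distr. exists y. auto. Qed.

Lemma mul_ideal {R : KrasnerHyperring} (I : R -> Prop) r {a} : hyperideal I -> I a -> I (hmul r a).
Proof. intros [_ [_ H]]. apply H. Qed.

Lemma pow_cong {R : KrasnerHyperring} (I : R -> Prop) {b t z : R} : hyperideal I -> hadd b t z -> I t ->
  forall k, exists u, I u /\ hadd (hpow b k) u (hpow z k).
Proof.
  intros HI Hz Ht k. induction k as [|k [u [Hu Hk]]].
  - exists hzero. split. apply ideal0; auto. simpl. apply hadd_zero. reflexivity.
  - simpl.
    pose proof (mul_distr z Hk) as H1.
    pose proof (mul_distr (hpow b k) Hz) as H2.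
    rewrite (hmul_comm _ (hpow b k) z) in H2.
    destruct (proj1 (hadd_assoc _ (hmul (hpow b k) b) (hmul (hpow b k) t) (hmul z u) (hmul z (hpow z k))))
      as [v [Hv1 Hv2]].
    { exists (hmul z (hpow b k)). split; auto. }
    exists v. split.
    + eapply add_closed; [exact HI| | |exact Hv1]; apply mul_ideal; auto.
    + rewrite (hmul_comm _ b). exact Hv2.
Qed.


Theorem mainTheorem12 (R : KrasnerHyperring)
  (phi : (R -> Prop) -> (R -> Prop))
  (Hphi : forall I : R -> Prop, hyperideal I -> hyperideal (phi I) \/ (forall x, ~ phi I x))
  (T : R -> Prop) (HT : hyperideal T) (HTp : proper T)
  (HTphi : phi_primary phi T) (HnotP : ~ primary T) :
  subset (hsq T) (phi T).
Proof.
  unfold primary in HnotP.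
  apply not_all_ex_not in HnotP. destruct HnotP as [a HnotP].
  apply not_all_ex_not in HnotP. destruct HnotP as [b HnotP].
  apply imply_to_and in HnotP. destruct HnotP as [Hab Hor].
  apply not_or_and in Hor. destruct Hor as [Ha Hbk].
  assert (Hpab : phi T (hmul a b)).
  { apply NNPP. intro Hn. destruct (HTphi a b Hab Hn); contradiction. }
  assert (HP : hyperideal (phi T)).
  { destruct (Hphi T HT) as [H|H]; [exact H| exfalso; exact (H _ Hpab)]. }
  assert (Hpow : forall z t, hadd b t z -> T t -> forall k, 1 <= k -> ~ T (hpow z k)).
  { intros z t Hz Ht k Hk HTk. apply Hbk. exists k. split; auto.
    destruct (pow_cong HT Hz Ht k) as [u [Hu Hu2]].
    eapply sub_l; eauto. }
  assert (Hw : forall w x, hadd a x w -> T x -> ~ T w).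
  { intros w x H Hx Hw. apply Ha. eapply sub_l; eauto. }
  assert (Key : forall w z, (exists x, hadd a x w /\ T x) -> (exists y, hadd b y z /\ T y) ->
              T (hmul w z) -> phi T (hmul w z)).
  { intros w z [x [Hx1 Hx2]] [y [Hy1 Hy2]] HT2. apply NNPP. intro Hn.
    destruct (HTphi w z HT2 Hn) as [H|[k [Hk H]]].
    - exact (Hw w x Hx1 Hx2 H).
    - exact (Hpow z y Hy1 Hy2 k Hk H). }
  assert (S1 : forall x, T x -> phi T (hmul a x)).
  { intros x Hx. destruct (hadd_nonempty _ b x) as [z Hz].
    pose proof (mul_distr a Hz) as Hd.
    assert (Pz : phi T (hmul a z)).
    { rewrite <- (hmul_one _ a) at 1.
      rewrite (hmul_one _ a).
      apply (Key a z).
      - exists hzero. split. apply hadd_zero. reflexivity. apply ideal0; auto.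
      - exists x; auto.
      - eapply add_closed; [exact HT|exact Hab| |exact Hd]. apply mul_ideal; auto. }
    eapply sub_r; eauto. }
  assert (S2 : forall y, T y -> phi T (hmul y b)).
  { intros y Hy. destruct (hadd_nonempty _ a y) as [w Hw'].
    pose proof (mul_distr b Hw') as Hd.
    rewrite !(hmul_comm _ b) in Hd.
    assert (Pw : phi T (hmul w b)).
    { apply (Key w b).
      - exists y; auto.
      - exists hzero. split. apply hadd_zero. reflexivity. apply ideal0; auto.
      - eapply add_closed; [exact HT|exact Hab| |exact Hd].
        rewrite hmul_comm. apply mul_ideal; auto. }
    eapply sub_r; eauto. }
  assert (S3 : forall x y, T x -> T y -> phi T (hmul x y)).
  { intros x y Hx Hy.
    destruct (hadd_nonempty _ a x) as [w Hw'].
    destruct (hadd_nonempty _ b y) as [z Hz].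
    pose proof (mul_distr w Hz) as Hd1.
    pose proof (mul_distr y Hw') as Hd2.
    rewrite !(hmul_comm _ y) in Hd2.
    pose proof (mul_distr b Hw') as Hd3.
    rewrite !(hmul_comm _ b) in Hd3.
    assert (Twb : T (hmul w b)).
    { eapply add_closed; [exact HT|exact Hab| |exact Hd3].
      rewrite hmul_comm. apply mul_ideal; auto. }
    assert (Pwz : phi T (hmul w z)).
    { apply Key; [exists x; auto|exists y; auto|].
      eapply add_closed; [exact HT|exact Twb| |exact Hd1]. apply mul_ideal; auto. }
    assert (Pwb : phi T (hmul w b)).
    { apply (add_closed HP Hpab (S2 x Hx) Hd3). }
    assert (Pwy : phi T (hmul w y)) by (eapply sub_r; eauto).
    assert (Pay : phi T (hmul a y)) by (apply S1; auto).
    eapply sub_r; eauto. }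
  intros x Hx. apply Hx; auto.
  intros u [p [q [Hp [Hq ->]]]]. apply S3; auto.
Qed.
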